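(* The Vitali equivalence relation $E_V$ on $\mathbb{R}$ is closed graphable with diameter $2$.
   Context: $xE_Vy$ iff $x-y\in\mathbb{Q}$. $E$ is closed graphable with diameter $k$ if there is a simple undirected graph $G\subseteq\mathbb{R}\times\mathbb{R}$, closed in $\mathbb{R}^2$, whose connectedness relation equals $E$ and $k$ is the least integer such that any two $G$-connected points are joined by a path of length at most $k$. *)

(* Defs.v *)
From HB Require Import structures.
From mathcomp Require Import all_boot all_order all_algebra.
From mathcomp Require Import all_classical all_reals all_analysis.
From mathcomp Require Import Rstruct Rstruct_topology.

Set Implicit Arguments. Unset Strict Implicit. Unset Printing Implicit Defensive.
Import Order.TTheory GRing.Theory Num.Theory.
Local Open Scope classical_set_scope.
Local Open Scope ring_scope.

Notation Rl := Rdefinitions.R.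

Definition vitali (x y : Rl) : Prop := exists q : rat, x - y = ratr q.

Fixpoint walk (G : Rl -> Rl -> Prop) (n : nat) (x y : Rl) : Prop :=
  match n with
  | O => x = y
  | S m => exists z, G x z /\ walk G m z y
  end.

Definition gconnected (G : Rl -> Rl -> Prop) (x y : Rl) : Prop :=
  exists n, walk G n x y.

Definition simple_graph (G : Rl -> Rl -> Prop) : Prop :=
  (forall x y, G x y -> G y x) /\ (forall x, ~ G x x).

Definition diam_le (G : Rl -> Rl -> Prop) (k : nat) : Prop :=
  forall x y, gconnected G x y -> exists n, leq n k /\ walk G n x y.

Definition closed_graphable_diam (E : Rl -> Rl -> Prop) (k : nat) : Prop :=
  exists G : Rl -> Rl -> Prop,
    [/\ simple_graph G,
        closed [set p : Rl * Rl | G p.1 p.2],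
        (forall x y, gconnected G x y <-> E x y),
        diam_le G k
      & (forall j, diam_le G j -> leq k j)].

(* Main.v *)
Require Import Defs.
From HB Require Import structures.
From mathcomp Require Import all_boot all_order all_algebra.
From mathcomp Require Import all_classical all_reals all_analysis.
From mathcomp Require Import Rstruct Rstruct_topology.
From mathcomp Require Import ring lra zify.
Import Order.TTheory GRing.Theory Num.Theory.
Local Open Scope classical_set_scope.
Local Open Scope ring_scope.

Definition Gv (x y : Rl) : Prop :=
  exists (d : nat) (m : int), (0 < d)%N /\ m != 0 /\
    d%:R <= Num.max `|x| `|y| /\ d%:R * (y - x) = m%:~R.

Lemma exists_nat (x : Rl) : exists n : nat, x < n%:R.
Proof.
exists (Num.Def.archi_bound `|x|).
apply: (le_lt_trans (ler_norm x)); exact: archi_boundP.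
Qed.

Lemma Gv_sym x y : Gv x y -> Gv y x.
Proof.
move=> [d [m [d0 [m0 [hd he]]]]]; exists d, (- m); split => //; split.
  by rewrite oppr_eq0.
split; first by rewrite maxC.
by rewrite mulrNz -he -mulrN opprB.
Qed.

Lemma Gv_irr x : ~ Gv x x.
Proof.
move=> [d [m [d0 [m0 [hd he]]]]].
by move: he; rewrite subrr mulr0 => /esym/eqP; rewrite intr_eq0 (negbTE m0).
Qed.

Lemma Gv_vitali x y : Gv x y -> vitali y x.
Proof.
move=> [d [m [d0 [m0 [hd he]]]]]; exists (m%:~R / d%:R).
rewrite fmorph_div rmorph_int rmorph_nat -he [d%:R * _]mulrC mulfK //.
by rewrite pnatr_eq0 -lt0n.
Qed.
Lemma walk_vitali n x y : walk Gv n x y -> vitali x y.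
Proof.
elim: n x => [|n IH] x /=.
  by move=> ->; exists 0; rewrite subrr rmorph0.
move=> [z [hxz hw]]; have [a ha] := Gv_vitali _ _ hxz; have [b hb] := IH _ hw.
exists (b - a); rewrite rmorphB /=; lra.
Qed.

Lemma vitali_walk2 x y : vitali x y -> walk Gv 2 x y.
Proof.
move=> [q hq].
set d := `|denq q|%N.
have dpos : (0 < d)%N by rewrite /d absz_gt0 denq_neq0.
have dR : d%:R = (denq q)%:~R :> Rl by rewrite /d natr_absz gtr0_norm // denq_gt0.
have [N hN] := exists_nat (`|x| + `|y| + d%:R + 1).
have hx := ler_norm x; have hy := ler_norm y; have hx' : - x <= `|x| by rewrite -normrN ler_norm.
have hd : 0 < d%:R :> Rl by rewrite ltr0n.
exists (x + N%:R); split.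
  exists 1%N, N%:Z; split => //; split.
    have N0 : (0 < N)%N.
      rewrite lt0n; apply/negP => /eqP N0; move: hN; rewrite N0.
      have := normr_ge0 x; have := normr_ge0 y; lra.
    lia.
  split; last by rewrite mul1r addrC addKr.
  rewrite le_max; apply/orP; right.
  have h := ler_norm (x + N%:R); apply: le_trans h.
  have := normr_ge0 y; lra.
exists y; split => //.
exists d, (- numq q - denq q * N%:Z); split => //; split.
  rewrite -(intr_eq0 Rl) rmorphB rmorphN rmorphM /= -dR.
  have -> : (numq q)%:~R = d%:R * ratr q :> Rl.
    by rewrite dR /ratr mulrC divfK // intr_eq0 denq_neq0.
  rewrite -hq.
  apply/eqP => h.
  have : d%:R * (y - (x + N%:R)) = 0 :> Rl by rewrite -h; ring.
  move/eqP; rewrite mulf_eq0 pnatr_eq0; case/orP => [/eqP d0|]; first by move: dpos; rewrite d0.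
  rewrite subr_eq0 => /eqP hyN.
  move: hN; have := normr_ge0 x; lra.
split.
  rewrite le_max; apply/orP; left.
  have h := ler_norm (x + N%:R); apply: le_trans h.
  have := normr_ge0 y; lra.
rewrite rmorphB rmorphN rmorphM /= -dR.
have -> : (numq q)%:~R = d%:R * ratr q :> Rl.
  by rewrite dR /ratr mulrC divfK // intr_eq0 denq_neq0.
rewrite -hq; ring.
Qed.

Lemma cont_fst : continuous (@fst Rl Rl).
Proof. by move=> p; apply: cvg_fst. Qed.
Lemma cont_snd : continuous (@snd Rl Rl).
Proof. by move=> p; apply: cvg_snd. Qed.

Lemma closed_lin (a m : Rl) : closed [set p : Rl * Rl | a * (p.2 - p.1) = m].
Proof.
have -> : [set p : Rl * Rl | a * (p.2 - p.1) = m] =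
  (fun p : Rl * Rl => a * (p.2 - p.1)) @^-1` [set x | x = m] by [].
apply: preimage_closed; last exact: closed_eq.
move=> p _; apply: cvgM; first exact: cvg_cst.
apply: (@cvgB Rl Rl^o); [exact: cvg_snd | exact: cvg_fst].
Qed.

Lemma closed_ab1 (a : Rl) : closed [set p : Rl * Rl | a <= `|p.1|].
Proof.
have -> : [set p : Rl * Rl | a <= `|p.1|] =
  (fun p : Rl * Rl => `|p.1|) @^-1` [set x | a <= x] by [].
apply: preimage_closed; last exact: closed_ge.
move=> p _; apply: continuous_comp; first exact: cont_fst.
exact: (@norm_continuous Rl Rl^o).
Qed.

Lemma closed_ab2 (a : Rl) : closed [set p : Rl * Rl | a <= `|p.2|].
Proof.
have -> : [set p : Rl * Rl | a <= `|p.2|] =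
  (fun p : Rl * Rl => `|p.2|) @^-1` [set x | a <= x] by [].
apply: preimage_closed; last exact: closed_ge.
move=> p _; apply: continuous_comp; first exact: cont_snd.
exact: (@norm_continuous Rl Rl^o).
Qed.

Lemma closed_prop (P : Prop) : closed [set p : Rl * Rl | P].
Proof.
case: (pselect P) => hP.
  have -> : [set p : Rl * Rl | P] = setT by apply/seteqP; split.
  exact: closedT.
have -> : [set p : Rl * Rl | P] = set0 by apply/seteqP; split => // p.
exact: closed0.
Qed.

Lemma closed_fin_ex (T : nat -> set (Rl * Rl)) n :
  (forall i, closed (T i)) -> closed [set q | exists i, (i < n)%N /\ T i q].
Proof.
move=> hT; elim: n => [|n IH].
  have -> : [set q | exists i, (i < 0)%N /\ T i q] = set0.
    by apply/seteqP; split => // q [i []].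
  exact: closed0.
have -> : [set q | exists i, (i < n.+1)%N /\ T i q] =
   [set q | exists i, (i < n)%N /\ T i q] `|` T n.
  apply/seteqP; split => q.
    move=> [i [hi hq]]; rewrite ltnS leq_eqVlt in hi.
    case/orP: hi => [/eqP Ei|hi]; [by right; rewrite -Ei | by left; exists i].
  by case=> [[i [hi hq]]|hq]; [exists i; split => //; apply: ltnW | exists n].
exact: closedU.
Qed.

Definition Tset (K i j : nat) : set (Rl * Rl) :=
  [set q | ((j:int) - K%:Z != 0) /\
     ((i.+1)%:R <= `|q.1| \/ (i.+1)%:R <= `|q.2|) /\
     (i.+1)%:R * (q.2 - q.1) = ((j:int) - K%:Z)%:~R].

Lemma closed_Tset K i j : closed (Tset K i j).
Proof.
have -> : Tset K i j = [set q : Rl * Rl | ((j:int) - K%:Z != 0)] `&`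
   (([set q : Rl * Rl | (i.+1)%:R <= `|q.1|] `|` [set q | (i.+1)%:R <= `|q.2|]) `&`
    [set q : Rl * Rl | (i.+1)%:R * (q.2 - q.1) = ((j:int) - K%:Z)%:~R]) by [].
apply: closedI; first exact: closed_prop.
apply: closedI; last exact: closed_lin.
apply: closedU; [exact: closed_ab1 | exact: closed_ab2].
Qed.

Lemma norm_bound (a b : Rl) : `|a - b| < 1 -> `|b| < `|a| + 1.
Proof.
move=> h; have := ler_normB a (a - b); rewrite opprB addrC subrK => h2.
lra.
Qed.

Lemma int_aux (m : int) (K : nat) : (`|m| < K%:Z)%R ->
  ((absz (m + K%:Z)%R) < (K+K).+1)%N /\ (((absz (m + K%:Z)%R) : int) - K%:Z = m).
Proof. move=> h; split; lia. Qed.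

Lemma closed_Gv : closed [set p : Rl * Rl | Gv p.1 p.2].
Proof.
move=> p hp.
have [N hN] := exists_nat (`|p.1| + `|p.2| + 2).
have [K hK] := exists_nat (N%:R * (`|p.1| + `|p.2| + 2)).
set F := [set q | exists i, (i < N)%N /\
   [set q | exists j, (j < (K + K).+1)%N /\ Tset K i j q] q].
have cF : closed F.
  apply: closed_fin_ex => i; apply: closed_fin_ex => j; exact: closed_Tset.
have : F p.
  apply: cF => B hB.
  have hU : nbhs p [set q : Rl*Rl | `|p.1 - q.1| < 1 /\ `|p.2 - q.2| < 1].
    exists (ball p.1 1, ball p.2 1); first by split; apply: nbhsx_ballx.
    move=> [a b] [/= ha hb]; move: ha hb.
    by [].
  have [q [Sq [Bq Uq]]] := hp _ (filterI hB hU).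
  exists q; split => //.
  move: Sq => [d [m [d0 [m0 [hd he]]]]].
  case: Uq => /norm_bound h1 /norm_bound h2.
  have n1 := normr_ge0 q.1; have n2 := normr_ge0 q.2.
  have np1 := normr_ge0 p.1; have np2 := normr_ge0 p.2.
  have hd' : d%:R <= `|q.1| \/ d%:R <= `|q.2|.
    by move: hd; rewrite le_max => /orP.
  have hdN : d%:R < N%:R :> Rl.
    case: hd' => hd'; lra.
  have hdN' : (d < N)%N by rewrite -(ltr_nat Rl).
  have hd0 : 0 <= d%:R :> Rl by [].
  have hm : `|m%:~R| < K%:R :> Rl.
    rewrite -he normrM ger0_norm //.
    have hq := ler_normB q.2 q.1.
    have : d%:R * `|q.2 - q.1| <= N%:R * (`|p.1| + `|p.2| + 2).
      have e1 : d%:R * `|q.2 - q.1| <= d%:R * (`|q.1| + `|q.2|).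
        by apply: ler_wpM2l => //; lra.
      have e2 : d%:R * (`|q.1| + `|q.2|) <= N%:R * (`|q.1| + `|q.2|).
        by apply: ler_wpM2r; lra.
      have e3 : N%:R * (`|q.1| + `|q.2|) <= N%:R * (`|p.1| + `|p.2| + 2).
        by apply: ler_wpM2l => //; lra.
      lra.
    lra.
  have hm' : (`|m| < K%:Z)%R by rewrite -(ltr_int Rl) intr_norm.
  exists d.-1; split; first exact: leq_ltn_trans (leq_pred d) hdN'.
  have [hj ej] := int_aux _ _ hm'.
  exists (absz (m + K%:Z)%R); split; first exact: hj.
  rewrite /Tset ej prednK //; split => //.
have hgood : forall i j, (i < N)%N -> Tset K i j p -> Gv p.1 p.2.
  move=> i j _ [hm [hd he]].
  exists i.+1, ((j:int) - K%:Z); split => //; split => //; split => //.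
  by rewrite le_max; apply/orP.
by move=> [i [hi [j [_ hT]]]]; exact: (hgood i j hi hT).
Qed.

Theorem proposition3p9 : closed_graphable_diam vitali 2.
Proof.
have conn : forall x y, gconnected Gv x y <-> vitali x y.
  move=> x y; split; first by move=> [n hn]; exact: walk_vitali hn.
  by move=> h; exists 2%N; exact: vitali_walk2.
exists Gv; split.
- split; [exact: Gv_sym | exact: Gv_irr].
- exact: closed_Gv.
- exact: conn.
- move=> x y /conn h; exists 2%N; split => //; exact: vitali_walk2.
move=> j hj; rewrite leqNgt; apply/negP => hj1.
have hv : vitali 0 (2^-1).
  exists (- 2^-1); rewrite sub0r rmorphN fmorphV /=.
  by rewrite (rmorph_nat (@ratr Rl) 2).
have [n [hn hw]] := hj _ _ ((conn _ _).2 hv).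
have : (n <= 1)%N by apply: leq_trans hn _; rewrite -ltnS.
case: n hn hw => [|[|n]] //= _.
  move=> h; have : (0 : Rl) < 2^-1 by rewrite invr_gt0 ltr0n.
  by rewrite -h ltxx.
move=> [z [[d [m [d0 [m0 [hd he]]]]] hz]] _; subst z.
move: hd; rewrite normr0 ger0_norm; last by rewrite invr_ge0 ler0n.
have h1 : (1 : Rl) <= d%:R by rewrite ler1n.
have h2 : (2^-1 : Rl) < 1 by rewrite invf_lt1 ?ltr0n // ltr1n.
have h0 : (0 : Rl) <= 2^-1 by rewrite invr_ge0 ler0n.
rewrite le_max => /orP [] h; lra.
Qed.
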